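(* For $m=1,2,3,\ldots$ define $$P_m=\prod_{n=1}^{\infty}\left(\prod_{k=0}^{n}(k+1)^{(-1)^{k+1}\binom{n}{k}}\right)^{\left(\frac{m}{m+1}\right)^n}.$$ Then the product converges, and $$\gamma(-m)=\frac{1}{m}\log\frac{m+1}{P_m}.$$
   Context: $\gamma(z)$ is the generalized-Euler-constant function: for $|z|\le1$, $\gamma(z)=\sum_{n=1}^{\infty} z^{n-1}\left(\frac{1}{n}-\log\frac{n+1}{n}\right)$, and for $z\in\mathbb{C}\setminus[1,\infty)$ (in particular for negative real $z$) it denotes the analytic continuation $\gamma(z)=\int_0^1\frac{1-x+\log x}{(1-xz)\log x}\,dx$. *)

(* Defs.v *)
From Stdlib Require Import Reals.
From Coquelicot Require Import Coquelicot.
Open Scope R_scope.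

Fixpoint prod_upto (f : nat -> R) (N : nat) : R :=
  match N with
  | O => 1
  | S N' => prod_upto f N' * f N'
  end.

(* Analytic continuation of the generalized Euler constant function:
   gamma(z) = int_0^1 (1 - x + log x) / ((1 - x z) log x) dx. *)
Definition gamma_fun (z : R) : R :=
  RInt (fun x => (1 - x + ln x) / ((1 - x * z) * ln x)) 0 1.

Definition inner_factor (n : nat) : R :=
  prod_upto (fun k => Rpower (INR k + 1) ((-1) ^ (k + 1) * Binomial.C n k)) (S n).

Definition P_partial (m : nat) (N : nat) : R :=
  prod_upto (fun i => Rpower (inner_factor (S i)) ((INR m / (INR m + 1)) ^ (S i))) N.

(* Main.v *)
Require Import Defs.
From Stdlib Require Import Reals Lra Lia.
From Coquelicot Require Import Coquelicot.
Open Scope R_scope.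

Lemma exp_quad w : 0 <= exp w - 1 - w <= w^2 * (1 + exp w).
Proof.
  pose proof (exp_ineq1_le w) as H1. pose proof (exp_ineq1_le (-w)) as H2.
  assert (HAB : exp w * exp (-w) = 1) by (rewrite <- exp_plus; replace (w + -w) with 0 by ring; apply exp_0).
  pose proof (exp_pos w). pose proof (exp_pos (-w)).
  split; [lra|].
  destruct (Rle_or_lt 0 w) as [Hw|Hw].
  - assert (exp w - 1 <= w * exp w) by nra. nra.
  - assert (exp w - 1 <= w * exp w) by nra. nra.
Qed.

Definition phi (z : R) : R := if Req_EM_T z 0 then 1 else (exp z - 1) / z.

Lemma phi_nz z : z <> 0 -> phi z = (exp z - 1) / z.
Proof. intros H; unfold phi; destruct (Req_EM_T z 0); [contradiction|reflexivity]. Qed.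

Lemma phi_0 : phi 0 = 1.
Proof. unfold phi; destruct (Req_EM_T 0 0); [reflexivity|contradiction]. Qed.

Lemma phi_bounds z : z <= 0 -> 0 < phi z <= 1.
Proof.
  intros Hz. destruct (Req_dec z 0) as [->|Hn]. rewrite phi_0; lra.
  rewrite phi_nz by auto.
  pose proof (exp_ineq1_le z). assert (exp z < 1) by (rewrite <- exp_0; apply exp_increasing; lra).
  split.
  - apply Rdiv_neg_neg; lra.
  - apply Rmult_le_reg_r with (-z). lra. unfold Rdiv. replace ((exp z - 1) * / z * - z) with (1 - exp z) by (field; auto). lra.
Qed.

Lemma cont_pos (f g : R -> R) x : 0 < x -> (forall y, 0 < y -> f y = g y) -> continuous g x -> continuous f x.
Proof.
  intros Hx Hfg Hg. apply continuous_ext_loc with g; auto.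
  exists (mkposreal x Hx). intros y Hy. simpl in Hy. unfold ball in Hy; simpl in Hy.
  unfold AbsRing_ball, abs, minus, plus, opp in Hy; simpl in Hy.
  symmetry; apply Hfg. apply Rabs_def2 in Hy. lra.
Qed.

Lemma cont_zero (f : R -> R) : (forall y, y <= 0 -> f y = 0) ->
  (forall eps, 0 < eps -> exists d, 0 < d /\ forall y, 0 < y < d -> Rabs (f y) < eps) ->
  continuous f 0.
Proof.
  intros H0 Hs. apply continuity_pt_filterlim.
  unfold continuity_pt, continue_in, limit1_in, limit_in. intros eps Heps.
  destruct (Hs eps Heps) as [d [Hd Hy]]. exists d; split; auto.
  intros y [_ Hyd]. simpl in *. unfold R_dist in *. rewrite (H0 0) by lra.
  replace (y - 0) with y in Hyd by ring. replace (f y - 0) with (f y) by ring.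
  destruct (Rle_or_lt y 0) as [Hy0|Hy0].
  - rewrite H0 by auto. rewrite Rabs_R0; auto.
  - apply Hy. split; auto. rewrite Rabs_right in Hyd; lra.
Qed.

Lemma phi_cont z : continuous phi z.
Proof.
  destruct (Req_dec z 0) as [->|Hz].
  - apply continuity_pt_filterlim. unfold continuity_pt, continue_in, limit1_in, limit_in.
    intros eps Heps. destruct (derivable_pt_lim_exp 0 eps Heps) as [d Hd].
    exists d; split; [apply cond_pos|]. intros y [Hy1 Hy2]. simpl in *. unfold R_dist in *.
    unfold D_x, no_cond in Hy1. destruct Hy1 as [_ Hy1].
    rewrite Rminus_0_r in Hy2. rewrite phi_0, phi_nz by auto.
    specialize (Hd y (not_eq_sym Hy1) Hy2). rewrite Rplus_0_l, exp_0 in Hd. exact Hd.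
  - apply continuous_ext_loc with (fun z => (exp z - 1)/z).
    + assert (0 < Rabs z) by (apply Rabs_pos_lt; auto).
      exists (mkposreal _ H). intros y Hy. simpl in Hy. unfold ball in Hy; simpl in Hy.
      unfold AbsRing_ball, abs, minus, plus, opp in Hy; simpl in Hy.
      rewrite phi_nz; auto. intros ->. rewrite Rplus_0_l, Rabs_Ropp in Hy. lra.
    + apply (ex_derive_continuous (K:=R_AbsRing) (V:=R_NormedModule)). auto_derive. auto.
Qed.
Lemma exp_le a b : a <= b -> exp a <= exp b.
Proof. intros [H|H]; [left; apply exp_increasing; auto|right; subst; auto]. Qed.

Definition K (t x : R) : R := if Rle_dec x 0 then 0 else t * phi (t * ln x).
Definition E (t x : R) : R := if Rle_dec x 0 then 0 else exp (t * ln x).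

Lemma K_le0 t x : x <= 0 -> K t x = 0.
Proof. intros; unfold K; destruct (Rle_dec x 0); [auto|lra]. Qed.
Lemma E_le0 t x : x <= 0 -> E t x = 0.
Proof. intros; unfold E; destruct (Rle_dec x 0); [auto|lra]. Qed.
Lemma K_pos t x : 0 < x -> K t x = t * phi (t * ln x).
Proof. intros; unfold K; destruct (Rle_dec x 0); [lra|auto]. Qed.
Lemma E_pos t x : 0 < x -> E t x = exp (t * ln x).
Proof. intros; unfold E; destruct (Rle_dec x 0); [lra|auto]. Qed.

Lemma K_formula t x : 0 < x -> ln x <> 0 -> K t x = (exp (t * ln x) - 1) / ln x.
Proof.
  intros Hx Hl. rewrite K_pos by auto. destruct (Req_dec t 0) as [->|Ht].
  - rewrite !Rmult_0_l, exp_0. unfold Rdiv; ring.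
  - rewrite phi_nz. field; auto. apply Rmult_integral_contrapositive; auto.
Qed.

Lemma ln_neg x : 0 < x < 1 -> ln x < 0.
Proof. intros. rewrite <- ln_1. apply ln_increasing; lra. Qed.

Lemma K_bound t x : 0 <= t -> 0 < x < 1 -> 0 <= K t x <= / (- ln x).
Proof.
  intros Ht Hx. pose proof (ln_neg x Hx). rewrite K_formula by lra.
  assert (exp (t * ln x) <= 1) by (rewrite <- exp_0; apply exp_le; nra).
  pose proof (exp_pos (t * ln x)).
  replace ((exp (t * ln x) - 1) / ln x) with ((1 - exp (t * ln x)) * / (- ln x)) by (field; lra).
  assert (0 < / - ln x) by (apply Rinv_0_lt_compat; lra). split; nra.
Qed.

Lemma K_01 t x : 0 <= t -> 0 <= x <= 1 -> 0 <= K t x <= t.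
Proof.
  intros Ht Hx. destruct (Rle_or_lt x 0). rewrite K_le0; lra.
  rewrite K_pos by lra. assert (ln x <= 0) by (rewrite <- ln_1; apply ln_le; lra).
  pose proof (phi_bounds (t * ln x)). assert (t * ln x <= 0) by nra. specialize (H1 H2). nra.
Qed.

Lemma K_cont t x : 0 < t -> 0 <= x -> continuous (K t) x.
Proof.
  intros Ht Hx. destruct (Rle_lt_or_eq _ _ Hx) as [Hx'|<-].
  - apply cont_pos with (fun y => t * phi (t * ln y)); auto. intros; apply K_pos; auto.
    apply (continuous_comp (fun y => t * ln y) (fun z => t * phi z)).
    + apply (ex_derive_continuous (K:=R_AbsRing) (V:=R_NormedModule)). auto_derive. auto.
    + apply (continuous_mult (fun _ => t) phi). apply continuous_const. apply phi_cont.
  - apply cont_zero. intros; apply K_le0; auto.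
    intros eps Heps. exists (Rmin 1 (exp (- / eps))). split.
    + apply Rmin_pos; [lra| apply exp_pos].
    + intros y [Hy1 Hy2]. assert (y < 1) by (apply Rlt_le_trans with (Rmin 1 (exp (- / eps))); [auto|apply Rmin_l]).
      assert (y < exp (- / eps)) by (apply Rlt_le_trans with (Rmin 1 (exp (- / eps))); [auto|apply Rmin_r]).
      assert (ln y < - / eps) by (rewrite <- (ln_exp (- / eps)); apply ln_increasing; lra).
      destruct (K_bound t y) as [B1 B2]; try lra. rewrite Rabs_right by lra.
      eapply Rle_lt_trans; [apply B2|]. pose proof (ln_neg y). 
      assert (0 < / eps) by (apply Rinv_0_lt_compat; lra).
      replace eps with (/ / eps) by (field; lra). apply Rinv_lt_contravar; nra.
Qed.

Lemma E_cont t x : 0 < t -> 0 <= x -> continuous (E t) x.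
Proof.
  intros Ht Hx. destruct (Rle_lt_or_eq _ _ Hx) as [Hx'|<-].
  - apply cont_pos with (fun y => exp (t * ln y)); auto. intros; apply E_pos; auto.
    apply (ex_derive_continuous (K:=R_AbsRing) (V:=R_NormedModule)). auto_derive. auto.
  - apply cont_zero. intros; apply E_le0; auto.
    intros eps Heps. exists (Rmin 1 (exp (ln eps / t))). split.
    + apply Rmin_pos; [lra| apply exp_pos].
    + intros y [Hy1 Hy2]. 
      assert (y < exp (ln eps / t)) by (apply Rlt_le_trans with (Rmin 1 (exp (ln eps / t))); [auto|apply Rmin_r]).
      assert (ln y < ln eps / t) by (rewrite <- (ln_exp (ln eps / t)); apply ln_increasing; lra).
      rewrite E_pos by auto. rewrite Rabs_right by (left; apply exp_pos).
      rewrite <- (exp_ln eps) by auto. apply exp_increasing.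
      apply Rmult_lt_reg_r with (/ t). apply Rinv_0_lt_compat; auto.
      replace (t * ln y * / t) with (ln y) by (field; lra). exact H0.
Qed.

Lemma K_int t : 0 < t -> ex_RInt (K t) 0 1.
Proof. intros Ht. apply (ex_RInt_continuous (V:=R_CompleteNormedModule)). intros z Hz. rewrite Rmin_left, Rmax_right in Hz by lra. apply K_cont; lra. Qed.
Lemma E_int t : 0 < t -> ex_RInt (E t) 0 1.
Proof. intros Ht. apply (ex_RInt_continuous (V:=R_CompleteNormedModule)). intros z Hz. rewrite Rmin_left, Rmax_right in Hz by lra. apply E_cont; lra. Qed.

Lemma RInt_minusR f g a b : ex_RInt f a b -> ex_RInt g a b ->
  RInt (fun x => f x - g x) a b = RInt f a b - RInt g a b.
Proof. intros. apply (RInt_minus (V:=R_CompleteNormedModule)); auto. Qed.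
Lemma RInt_plusR f g a b : ex_RInt f a b -> ex_RInt g a b ->
  RInt (fun x => f x + g x) a b = RInt f a b + RInt g a b.
Proof. intros. apply (RInt_plus (V:=R_CompleteNormedModule)); auto. Qed.
Lemma RInt_scalR f c a b : ex_RInt f a b -> RInt (fun x => c * f x) a b = c * RInt f a b.
Proof. intros. apply (RInt_scal (V:=R_CompleteNormedModule)); auto. Qed.
Lemma ex_RInt_minusR f g a b : ex_RInt f a b -> ex_RInt g a b -> ex_RInt (fun x => f x - g x) a b.
Proof. intros. apply (ex_RInt_minus (V:=R_CompleteNormedModule)); auto. Qed.
Lemma ex_RInt_plusR f g a b : ex_RInt f a b -> ex_RInt g a b -> ex_RInt (fun x => f x + g x) a b.
Proof. intros. apply (ex_RInt_plus (V:=R_CompleteNormedModule)); auto. Qed.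
Lemma ex_RInt_scalR f c a b : ex_RInt f a b -> ex_RInt (fun x => c * f x) a b.
Proof. intros. apply (ex_RInt_scal (V:=R_CompleteNormedModule)); auto. Qed.

Lemma small_zero x C : 0 <= C -> (forall a, 0 < a < 1 -> Rabs x <= C * a) -> x = 0.
Proof.
  intros HC H. destruct (Req_dec x 0) as [|Hx]; auto. exfalso.
  assert (Hp : 0 < Rabs x) by (apply Rabs_pos_lt; auto).
  set (a := Rmin (1/2) (Rabs x / (2 * (C + 1)))).
  assert (Ha1 : a <= 1/2) by apply Rmin_l.
  assert (Ha2 : a <= Rabs x / (2 * (C + 1))) by apply Rmin_r.
  assert (Ha0 : 0 < a) by (apply Rmin_pos; [lra| apply Rdiv_lt_0_compat; lra]).
  specialize (H a ltac:(lra)).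
  assert (C * a <= (C+1) * (Rabs x / (2 * (C + 1)))) by nra.
  replace ((C+1) * (Rabs x / (2 * (C + 1)))) with (Rabs x / 2) in H0 by (field; lra). lra.
Qed.

Lemma E_RInt t : 0 < t -> RInt (E t) 0 1 = / (t + 1).
Proof.
  intros Ht. apply Rminus_diag_uniq. apply small_zero with 2; [lra|]. intros a Ha.
  assert (Hi := E_int t Ht).
  assert (I1 : ex_RInt (E t) 0 a) by (apply (ex_RInt_Chasles_1 (V:=R_CompleteNormedModule)) with 1; [lra|auto]).
  assert (I2 : ex_RInt (E t) a 1) by (apply (ex_RInt_Chasles_2 (V:=R_CompleteNormedModule)) with 0; [lra|auto]).
  rewrite <- (RInt_Chasles (V:=R_CompleteNormedModule) (E t) 0 a 1) by auto.
  pose (G := fun x => exp ((t+1) * ln x) / (t+1)).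
  assert (Hd : is_RInt (E t) a 1 (minus (G 1) (G a))).
  { apply (is_RInt_derive (V:=R_CompleteNormedModule) G).
    - intros x Hx. rewrite Rmin_left, Rmax_right in Hx by lra. unfold G. auto_derive. lra.
      rewrite E_pos by lra.
      replace (exp ((t+1) * ln x)) with (exp (t * ln x) * x).
      field. split; lra.
      rewrite <- (exp_ln x) at 2 by lra. rewrite <- exp_plus. f_equal; ring.
    - intros x Hx. rewrite Rmin_left, Rmax_right in Hx by lra. apply E_cont; lra. }
  apply (is_RInt_unique (V:=R_CompleteNormedModule)) in Hd. rewrite Hd. clear Hd. unfold G.
  unfold minus, plus, opp; simpl. rewrite ln_1, Rmult_0_r, exp_0.
  assert (B1 : Rabs (RInt (E t) 0 a) <= (a - 0) * 1).
  { apply abs_RInt_le_const; [lra|auto|]. intros x Hx. destruct (Rle_or_lt x 0).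
    rewrite E_le0, Rabs_R0 by auto; lra. rewrite E_pos by lra.
    rewrite Rabs_right by (left; apply exp_pos). rewrite <- exp_0. apply exp_le.
    assert (ln x <= 0) by (rewrite <- ln_1; apply ln_le; lra). nra. }
  assert (B2 : 0 < exp ((t+1) * ln a) <= a).
  { split. apply exp_pos. rewrite <- (exp_ln a) at 2 by lra. apply exp_le.
    pose proof (ln_neg a Ha). nra. }
  assert (B3 : 0 < exp ((t+1) * ln a) / (t + 1) <= a).
  { split. apply Rdiv_lt_0_compat; lra. unfold Rdiv. 
    assert (/ (t+1) <= 1) by (rewrite <- Rinv_1; apply Rinv_le_contravar; lra).
    assert (0 < / (t+1)) by (apply Rinv_0_lt_compat; lra). nra. }
  replace (RInt (E t) 0 a + (1 / (t + 1) + - (exp ((t + 1) * ln a) / (t + 1))) - / (t + 1))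
    with (RInt (E t) 0 a - exp ((t + 1) * ln a) / (t + 1)) by (field; lra).
  eapply Rle_trans. apply Rabs_triang. rewrite Rabs_Ropp. rewrite (Rabs_right (_ / _)) by lra. lra.
Qed.

Lemma u_exp u : 0 < u -> u * exp (- u) <= 1.
Proof.
  intros Hu. pose proof (exp_ineq1_le u). 
  assert (exp u * exp (-u) = 1) by (rewrite <- exp_plus; replace (u + - u) with 0 by ring; apply exp_0).
  pose proof (exp_pos (-u)). nra.
Qed.

Lemma D_bound t h x : 0 < t -> Rabs h < t / 2 -> 0 <= x <= 1 ->
  Rabs (K (t + h) x - K t x - h * E t x) <= 4 * h^2 / t.
Proof.
  intros Ht Hh Hx. assert (Hq : 0 <= 4 * h^2 / t) by (apply Rdiv_le_0_compat; nra).
  destruct (Rle_or_lt x 0) as [H0|H0].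
  { rewrite !K_le0, E_le0 by auto. replace (0 - 0 - h * 0) with 0 by ring. rewrite Rabs_R0; auto. }
  destruct (Req_dec x 1) as [->|H1].
  { rewrite !K_pos, E_pos by lra. rewrite ln_1, !Rmult_0_r, phi_0, exp_0.
    replace ((t + h) * 1 - t * 1 - h * 1) with 0 by ring. rewrite Rabs_R0; auto. }
  assert (Hl : ln x < 0) by (apply ln_neg; lra).
  rewrite !K_formula by lra. rewrite E_pos by lra.
  set (l := ln x) in *. set (A := exp (t * l)). set (B := exp (h * l)).
  assert (HAB : exp ((t + h) * l) = A * B) by (unfold A, B; rewrite <- exp_plus; f_equal; ring).
  rewrite HAB.
  replace ((A * B - 1) / l - (A - 1) / l - h * A) with (A * (B - 1 - h * l) / l) by (field; lra).
  pose proof (exp_quad (h * l)) as Q. fold B in Q.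
  set (G := exp ((t/2) * l)).
  assert (HA : A <= G) by (apply exp_le; nra).
  assert (HABG : A * B <= G) by (rewrite <- HAB; apply exp_le; apply Rabs_def2 in Hh; nra).
  assert (HG : (- l) * G <= 2 / t).
  { pose proof (u_exp (- (t/2) * l) ltac:(nra)). unfold G.
    replace (- (- (t / 2) * l)) with (t/2 * l) in H by ring.
    apply Rmult_le_reg_l with (t/2). lra. replace (t / 2 * (2 / t)) with 1 by (field; lra). nra. }
  assert (0 < A) by apply exp_pos. assert (0 < B) by apply exp_pos.
  rewrite Rabs_div by lra. rewrite Rabs_mult. rewrite (Rabs_right A) by lra.
  rewrite (Rabs_right (B - 1 - h * l)) by lra. rewrite (Rabs_left l) by lra.
  apply Rmult_le_reg_r with (- l). lra. unfold Rdiv. rewrite Rmult_assoc, Rinv_l, Rmult_1_r by lra.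
  assert (A * (B - 1 - h * l) <= h^2 * l^2 * (A + A * B)).
  { replace (h^2 * l^2 * (A + A * B)) with (A * ((h * l)^2 * (1 + B))) by ring.
    apply Rmult_le_compat_l; lra. }
  assert (h^2 * l^2 * (A + A * B) <= h^2 * (-l) * (2 * (2 / t))).
  { replace (h^2 * l^2 * (A + A * B)) with (h^2 * (-l) * ((-l) * A + (-l) * (A * B))) by ring.
    assert (0 <= h^2 * (-l)) by nra. apply Rmult_le_compat_l; auto.
    assert ((-l) * A <= (-l) * G) by (apply Rmult_le_compat_l; lra).
    assert ((-l) * (A * B) <= (-l) * G) by (apply Rmult_le_compat_l; lra). lra. }
  replace (4 * h ^ 2 * / t * - l) with (h^2 * (-l) * (2 * (2 / t))) by (field; lra). lra.
Qed.

Lemma F_deriv t : 0 < t -> is_derive (fun s => RInt (K s) 0 1) t (/ (1 + t)).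
Proof.
  intros Ht. apply is_derive_Reals. intros eps Heps.
  assert (Hd : 0 < Rmin (t/2) (eps * t / 8)) by (apply Rmin_pos; [lra|]; apply Rdiv_lt_0_compat; nra).
  exists (mkposreal _ Hd). intros h Hh0 Hh. simpl in Hh.
  assert (Hh1 : Rabs h < t / 2) by (apply Rlt_le_trans with (1 := Hh); apply Rmin_l).
  assert (Hh2 : Rabs h < eps * t / 8) by (apply Rlt_le_trans with (1 := Hh); apply Rmin_r).
  assert (Hth : 0 < t + h) by (apply Rabs_def2 in Hh1; lra).
  assert (Hint : RInt (fun x => K (t + h) x - K t x - h * E t x) 0 1 =
     RInt (K (t+h)) 0 1 - RInt (K t) 0 1 - h * RInt (E t) 0 1).
  { rewrite RInt_minusR, RInt_minusR, RInt_scalR; auto using K_int, E_int, ex_RInt_minusR, ex_RInt_scalR. }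
  assert (Hb : Rabs (RInt (fun x => K (t + h) x - K t x - h * E t x) 0 1) <= (1 - 0) * (4 * h^2 / t)).
  { apply abs_RInt_le_const. lra.
    apply ex_RInt_minusR. apply ex_RInt_minusR; auto using K_int. apply ex_RInt_scalR; auto using E_int.
    intros; apply D_bound; auto. }
  rewrite Hint, E_RInt in Hb by auto.
  replace ((RInt (K (t + h)) 0 1 - RInt (K t) 0 1) / h - / (1 + t))
    with ((RInt (K (t + h)) 0 1 - RInt (K t) 0 1 - h * / (t + 1)) / h) by (field; split; [lra|auto]).
  rewrite Rabs_div by auto.
  assert (0 < Rabs h) by (apply Rabs_pos_lt; auto).
  apply Rmult_lt_reg_r with (Rabs h). auto. unfold Rdiv. rewrite Rmult_assoc, Rinv_l, Rmult_1_r by lra.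
  eapply Rle_lt_trans. apply Hb.
  replace (h^2) with (Rabs h * Rabs h) by (rewrite <- Rabs_mult; rewrite Rabs_right; [ring| nra]).
  replace ((1 - 0) * (4 * (Rabs h * Rabs h) / t)) with (Rabs h * (4 * Rabs h / t)) by (field; lra).
  rewrite (Rmult_comm eps). apply Rmult_lt_compat_l; auto.
  apply Rmult_lt_reg_r with (t / 4). lra. replace (4 * Rabs h / t * (t / 4)) with (Rabs h) by (field; lra).
  replace (eps * (t/4)) with (eps * t / 4) by field. apply Rlt_trans with (1 := Hh2). nra.
Qed.

Lemma F_small a : 0 < a -> Rabs (RInt (K a) 0 1) <= a.
Proof.
  intros Ha. replace a with ((1 - 0) * a) at 2 by ring. apply abs_RInt_le_const. lra. apply K_int; auto.
  intros x Hx. destruct (K_01 a x) as [H1 H2]; try lra. rewrite Rabs_right; lra.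
Qed.

Lemma F_ln k : RInt (K (INR k)) 0 1 = ln (INR k + 1).
Proof.
  destruct k as [|k].
  - simpl. rewrite Rplus_0_l, ln_1. rewrite (RInt_ext (V:=R_CompleteNormedModule) _ (fun _ => 0)).
    rewrite RInt_const. unfold scal; simpl. unfold mult; simpl. ring.
    intros x Hx. rewrite Rmin_left, Rmax_right in Hx by lra. rewrite K_pos by lra. apply Rmult_0_l.
  - set (T := INR (S k)). assert (HT : 1 <= T) by (unfold T; rewrite S_INR; pose proof (pos_INR k); lra).
    pose (H := fun s => RInt (K s) 0 1 - ln (s + 1)).
    apply Rminus_diag_uniq. change (H T = 0). apply small_zero with 2; [lra|]. intros a Ha.
    assert (Heq : H a = H T).
    { apply (eq_is_derive (V:=R_NormedModule)); [|lra]. intros s Hs.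
      unfold H. replace (@zero R_NormedModule) with (/ (1 + s) - / (s + 1)) by (simpl; unfold zero; simpl; field; lra).
      apply (is_derive_minus (K:=R_AbsRing) (V:=R_NormedModule) (fun s => RInt (K s) 0 1) (fun s => ln (s + 1))).
      apply F_deriv; lra. auto_derive. lra. field; lra. }
    rewrite <- Heq. unfold H. pose proof (F_small a ltac:(lra)).
    assert (0 <= ln (a + 1) <= a).
    { split. rewrite <- ln_1. apply ln_le; lra. rewrite <- (ln_exp a) at 2. apply ln_le. lra.
      pose proof (exp_ineq1_le a); lra. }
    eapply Rle_trans. apply Rabs_triang. rewrite Rabs_Ropp, (Rabs_right (ln _)) by lra. lra.
Qed.

Fixpoint sum_upto (f : nat -> R) (N : nat) : R :=
  match N with O => 0 | S N' => sum_upto f N' + f N' end.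

Lemma sum_upto_ext f g N : (forall k, (k < N)%nat -> f k = g k) -> sum_upto f N = sum_upto g N.
Proof. induction N; simpl; intros H; auto. rewrite IHN, H; auto. Qed.
Lemma sum_upto_scal c f N : sum_upto (fun k => c * f k) N = c * sum_upto f N.
Proof. induction N; simpl; [ring|rewrite IHN; ring]. Qed.
Lemma sum_upto_minus f g N : sum_upto (fun k => f k - g k) N = sum_upto f N - sum_upto g N.
Proof. induction N; simpl; [ring|rewrite IHN; ring]. Qed.
Lemma sum_upto_f_R0 f n : sum_upto f (S n) = sum_f_R0 f n.
Proof. induction n; simpl; [ring|]. simpl in IHn. rewrite <- IHn. ring. Qed.
Lemma sum_upto_geom r N : sum_upto (fun i => r ^ i) N * (1 - r) = 1 - r ^ N.
Proof. induction N; simpl; [ring|]. rewrite Rmult_plus_distr_r, IHN. ring. Qed.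

Lemma prod_upto_pos f N : (forall k, 0 < f k) -> 0 < prod_upto f N.
Proof. intros H; induction N; simpl; [lra|]. apply Rmult_lt_0_compat; auto. Qed.
Lemma ln_prod f N : (forall k, 0 < f k) -> ln (prod_upto f N) = sum_upto (fun k => ln (f k)) N.
Proof.
  intros H; induction N; simpl. apply ln_1. rewrite ln_mult; auto. rewrite IHN; auto. apply prod_upto_pos; auto.
Qed.
Lemma ln_Rpower x y : ln (Rpower x y) = y * ln x.
Proof. unfold Rpower. apply ln_exp. Qed.
Lemma Rpower_pos x y : 0 < Rpower x y.
Proof. unfold Rpower. apply exp_pos. Qed.

Lemma binom_sum n y : sum_upto (fun k => (-1) ^ (k + 1) * Binomial.C n k * y ^ k) (S n) = - (1 - y) ^ n.
Proof.
  replace (1 - y) with (- y + 1) by ring. rewrite binomial, <- sum_upto_f_R0.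
  replace (- sum_upto (fun i => Binomial.C n i * (- y) ^ i * 1 ^ (n - i)) (S n)) with
    (sum_upto (fun i => -1 * (Binomial.C n i * (- y) ^ i * 1 ^ (n - i))) (S n)) by (rewrite sum_upto_scal; ring).
  apply sum_upto_ext. intros k _. rewrite pow1, pow_add.
  replace (- y) with (-1 * y) by ring. rewrite Rpow_mult_distr. simpl. ring.
Qed.

Lemma K0_int : ex_RInt (K 0) 0 1.
Proof.
  apply (ex_RInt_ext (V:=R_CompleteNormedModule) (fun _ => 0)). 2: apply ex_RInt_const.
  intros x Hx. rewrite Rmin_left, Rmax_right in Hx by lra. rewrite K_pos by lra. symmetry; apply Rmult_0_l.
Qed.
Lemma Kk_int k : ex_RInt (K (INR k)) 0 1.
Proof. destruct k. apply K0_int. apply K_int. apply lt_0_INR; lia. Qed.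

Lemma RInt_sum (c : nat -> R) (g : nat -> R -> R) a b N : (forall k, ex_RInt (g k) a b) ->
  ex_RInt (fun x => sum_upto (fun k => c k * g k x) N) a b /\
  RInt (fun x => sum_upto (fun k => c k * g k x) N) a b = sum_upto (fun k => c k * RInt (g k) a b) N.
Proof.
  intros Hg. induction N; simpl.
  - split. apply (ex_RInt_const (V:=R_CompleteNormedModule)). rewrite RInt_const. unfold scal; simpl; unfold mult; simpl. ring.
  - destruct IHN as [I1 I2]. split. apply ex_RInt_plusR; auto. apply ex_RInt_scalR; auto.
    rewrite RInt_plusR; auto. rewrite I2, RInt_scalR; auto. apply ex_RInt_scalR; auto.
Qed.

Lemma poly_K_int n : ex_RInt (fun x => (1 - x) ^ n * K 1 x) 0 1.
Proof.
  apply (ex_RInt_continuous (V:=R_CompleteNormedModule)). intros z Hz. rewrite Rmin_left, Rmax_right in Hz by lra.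
  apply (continuous_mult (fun x => (1 - x) ^ n) (K 1)).
  apply (ex_derive_continuous (K:=R_AbsRing) (V:=R_NormedModule)). auto_derive. auto.
  apply K_cont; lra.
Qed.

Lemma inner_ln n : (1 <= n)%nat -> ln (inner_factor n) = RInt (fun x => (1 - x) ^ (n - 1) * K 1 x) 0 1.
Proof.
  intros Hn. unfold inner_factor. rewrite ln_prod by (intros; apply Rpower_pos).
  rewrite (sum_upto_ext _ (fun k => ((-1) ^ (k + 1) * Binomial.C n k) * RInt (K (INR k)) 0 1))
    by (intros; rewrite ln_Rpower, F_ln; ring).
  destruct (RInt_sum (fun k => (-1) ^ (k + 1) * Binomial.C n k) (fun k => K (INR k)) 0 1 (S n) Kk_int) as [_ R].
  rewrite <- R. apply (RInt_ext (V:=R_CompleteNormedModule)). intros x Hx.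
  rewrite Rmin_left, Rmax_right in Hx by lra. assert (Hl := ln_neg x Hx).
  rewrite (sum_upto_ext _ (fun k => / ln x * ((-1) ^ (k + 1) * Binomial.C n k * x ^ k - (-1) ^ (k + 1) * Binomial.C n k * 1 ^ k))).
  2: { intros k _. rewrite K_formula by lra. rewrite pow1.
       replace (exp (INR k * ln x)) with (x ^ k) by (rewrite <- Rpower_pow by lra; reflexivity). field. lra. }
  rewrite sum_upto_scal, sum_upto_minus, !binom_sum. rewrite K_formula by lra.
  rewrite Rmult_1_l, exp_ln by lra. destruct n as [|n']; [lia|].
  replace (S n' - 1)%nat with n' by lia. replace (1 - 1) with 0 by ring. simpl. field. lra.
Qed.

Lemma inv_int (M : R) : 0 <= M -> ex_RInt (fun x => / (1 + M * x)) 0 1.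
Proof.
  intros HM. apply (ex_RInt_continuous (V:=R_CompleteNormedModule)). intros z Hz. rewrite Rmin_left, Rmax_right in Hz by lra.
  apply (ex_derive_continuous (K:=R_AbsRing) (V:=R_NormedModule)). auto_derive. nra.
Qed.

Lemma inv_RInt (M : R) : 0 < M -> RInt (fun x => / (1 + M * x)) 0 1 = ln (1 + M) / M.
Proof.
  intros HM. pose (G := fun x => ln (1 + M * x) / M).
  assert (Hd : is_RInt (fun x => / (1 + M * x)) 0 1 (minus (G 1) (G 0))).
  { apply (is_RInt_derive (V:=R_CompleteNormedModule) G).
    - intros x Hx. rewrite Rmin_left, Rmax_right in Hx by lra. unfold G. auto_derive. nra. field. nra.
    - intros x Hx. rewrite Rmin_left, Rmax_right in Hx by lra.
      apply (ex_derive_continuous (K:=R_AbsRing) (V:=R_NormedModule)). auto_derive. nra. }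
  apply (is_RInt_unique (V:=R_CompleteNormedModule)) in Hd. rewrite Hd. unfold G, minus, plus, opp; simpl.
  rewrite Rmult_0_r, Rplus_0_r, ln_1, Rmult_1_r. field. lra.
Qed.

Lemma Lf_int (M : R) : 0 <= M -> ex_RInt (fun x => K 1 x * (M / (1 + M * x))) 0 1.
Proof.
  intros HM. apply (ex_RInt_continuous (V:=R_CompleteNormedModule)). intros z Hz. rewrite Rmin_left, Rmax_right in Hz by lra.
  apply (continuous_mult (K 1) (fun x => M / (1 + M * x))). apply K_cont; lra.
  apply (ex_derive_continuous (K:=R_AbsRing) (V:=R_NormedModule)). auto_derive. nra.
Qed.

Theorem corollary10 (m : nat) (hm : (1 <= m)%nat) :
  exists P : R,
    0 < P /\
    is_lim_seq (P_partial m) P /\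
    gamma_fun (- INR m) = / INR m * ln ((INR m + 1) / P).
Proof.
  set (M := INR m). assert (HM : 1 <= M) by (unfold M; apply (le_INR 1); auto).
  set (q := M / (M + 1)).
  assert (Hq : 0 < q < 1) by (unfold q; split; [apply Rdiv_lt_0_compat; lra|];
     apply Rmult_lt_reg_r with (M+1); [lra|]; unfold Rdiv; rewrite Rmult_assoc, Rinv_l; lra).
  set (Lf := fun x => K 1 x * (M / (1 + M * x))).
  set (L := RInt Lf 0 1).
  set (S := fun N x => sum_upto (fun i => q ^ (S i) * ((1 - x) ^ i * K 1 x)) N).
  assert (HLN : forall N, ln (P_partial m N) = RInt (S N) 0 1).
  { intros N. unfold P_partial. rewrite ln_prod by (intros; apply Rpower_pos).
    rewrite (sum_upto_ext _ (fun i => q ^ (Datatypes.S i) * RInt (fun x => (1 - x) ^ i * K 1 x) 0 1)).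
    2: { intros i _. rewrite ln_Rpower, inner_ln by lia. replace (Datatypes.S i - 1)%nat with i by lia. reflexivity. }
    destruct (RInt_sum (fun i => q ^ (Datatypes.S i)) (fun i x => (1 - x) ^ i * K 1 x) 0 1 N poly_K_int) as [_ R].
    rewrite <- R. reflexivity. }
  assert (HSint : forall N, ex_RInt (S N) 0 1).
  { intros N. apply (RInt_sum (fun i => q ^ (Datatypes.S i)) (fun i x => (1 - x) ^ i * K 1 x) 0 1 N poly_K_int). }
  assert (Hbound : forall N, Rabs (ln (P_partial m N) - L) <= M * q ^ N).
  { intros N. rewrite HLN. unfold L. rewrite <- RInt_minusR; auto. 2: apply Lf_int; lra.
    replace (M * q ^ N) with ((1 - 0) * (M * q ^ N)) by ring.
    apply abs_RInt_le_const. lra. apply ex_RInt_minusR; auto. apply Lf_int; lra.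
    intros x Hx. unfold S, Lf.
    set (r := q * (1 - x)).
    rewrite (sum_upto_ext _ (fun i => (q * K 1 x) * r ^ i)) by (intros i _; unfold r; rewrite Rpow_mult_distr; simpl; ring).
    rewrite sum_upto_scal.
    assert (Hr : 0 <= r <= q) by (unfold r; split; nra).
    pose proof (sum_upto_geom r N) as Hg.
    assert (Hs : sum_upto (fun i => r ^ i) N = (1 - r ^ N) / (1 - r)) by (rewrite <- Hg; field; lra).
    change (pow r) with (fun i => r ^ i). rewrite Hs. destruct (K_01 1 x) as [K1 K2]; try lra.
    assert (HrN : 0 <= r ^ N <= q ^ N) by (split; [apply pow_le; lra| apply pow_incr; lra]).
    replace (q * K 1 x * ((1 - r ^ N) / (1 - r)) - K 1 x * (M / (1 + M * x)))
      with (- (K 1 x * M * r ^ N / (1 + M * x))).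
    2: { assert (H1r : 1 - r = (1 + M * x) / (M + 1)) by (unfold r, q; field; lra).
         rewrite H1r. unfold q. field. split; nra. }
    rewrite Rabs_Ropp. rewrite Rabs_right.
    2: { apply Rle_ge. apply Rdiv_le_0_compat; [|nra]. apply Rmult_le_pos; [|lra]. apply Rmult_le_pos; lra. }
    apply Rle_trans with (K 1 x * M * r ^ N).
    { unfold Rdiv. rewrite <- (Rmult_1_r (K 1 x * M * r ^ N)) at 2. apply Rmult_le_compat_l.
      apply Rmult_le_pos; [|lra]. apply Rmult_le_pos; lra.
      rewrite <- Rinv_1. apply Rinv_le_contravar; nra. }
    assert (0 <= M * r ^ N) by nra. assert (K 1 x * (M * r^N) <= 1 * (M * r^N)) by (apply Rmult_le_compat_r; lra).
    nra. }
  assert (HlimL : is_lim_seq (fun N => ln (P_partial m N)) L).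
  { assert (Hg : is_lim_seq (fun N => M * q ^ N) (M * 0)).
    { apply is_lim_seq_mult'. apply is_lim_seq_const. apply is_lim_seq_geom. rewrite Rabs_right; lra. }
    rewrite Rmult_0_r in Hg.
    apply is_lim_seq_le_le with (fun N => L - M * q ^ N) (fun N => L + M * q ^ N).
    - intros N. specialize (Hbound N). apply Rabs_le_between in Hbound. lra.
    - replace (Finite L) with (Finite (L - 0)) by (f_equal; first [apply Rminus_0_r | symmetry; apply Rminus_0_r]). apply is_lim_seq_minus'; auto. apply is_lim_seq_const.
    - replace (Finite L) with (Finite (L + 0)) by (f_equal; first [apply Rplus_0_r | symmetry; apply Rplus_0_r]). apply is_lim_seq_plus'; auto. apply is_lim_seq_const. }
  assert (Hpos : forall N, 0 < P_partial m N) by (intros; apply prod_upto_pos; intros; apply Rpower_pos).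
  exists (exp L). split; [apply exp_pos|]. split.
  - apply is_lim_seq_ext with (fun N => exp (ln (P_partial m N))). intros; apply exp_ln; auto.
    apply is_lim_seq_continuous; auto. apply derivable_continuous_pt, derivable_pt_exp.
  - unfold gamma_fun. rewrite ln_div by (try apply exp_pos; lra). rewrite ln_exp.
    rewrite (RInt_ext (V:=R_CompleteNormedModule) _ (fun x => / (1 + M * x) - / M * Lf x)).
    2: { intros x Hx. rewrite Rmin_left, Rmax_right in Hx by lra. assert (Hl := ln_neg x Hx).
         unfold Lf. rewrite K_formula by lra. rewrite Rmult_1_l, exp_ln by lra. fold M. match goal with |- ?a = ?b => change (@eq R a b) end. field.
         split; [nra|]. split; lra. }
    rewrite RInt_minusR. rewrite RInt_scalR. rewrite inv_RInt by lra. fold L. rewrite Rplus_comm. field. lra.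
    apply Lf_int; lra. apply inv_int; lra. apply ex_RInt_scalR, Lf_int; lra.
Qed.
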